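(* Let $G$ be a graph and let $G_{(2)}$ be the graph obtained from $G$ by subdividing each edge an even number of times, i.e. each edge $uv$ of $G$ is replaced by an induced path between $u$ and $v$ having an even number of internal (new) vertices, these paths being internally vertex-disjoint. Then $G$ is $1$-extendable if and only if $G_{(2)}$ is $1$-extendable.
   Context: All graphs are finite, simple and undirected. A graph is $1$-extendable if every vertex belongs to some maximum independent set (an independent set of maximum size) of the graph. *)

(* Defs.v *)
(* Simple graphs as symmetric irreflexive relations on a finType. *)
From mathcomp Require Import all_boot.
Set Implicit Arguments. Unset Strict Implicit. Unset Printing Implicit Defensive.

Section Indep.
Variables (V : finType) (r : rel V).

Definition independent (S : {set V}) : bool :=
  [forall x in S, forall y in S, ~~ r x y].

Definition alpha : nat := \max_(S : {set V} | independent S) #|S|.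

Definition max_indep (S : {set V}) : bool := independent S && (#|S| == alpha).

Definition one_extendable : Prop :=
  forall v : V, exists S : {set V}, max_indep S /\ v \in S.
End Indep.

Section Subdivision.
Variables (T : finType) (e : rel T).

Definition edge_set : {set {set T}} :=
  [set s : {set T} | [exists x, exists y, (s == [set x; y]) && e x y]].

(* m s = half the number of subdivision vertices put on edge s *)
Variable m : {set T} -> nat.

Definition sd_bound : nat := \max_(s : {set T}) (2 * m s).

Definition sd_internal :=
  {p : {set T} * 'I_sd_bound | (p.1 \in edge_set) && (val p.2 < 2 * m p.1)}.

Definition sd_vertex := (T + sd_internal)%type.

Definition low_end (s : {set T}) (x : T) : bool :=
  (x \in s) && [forall y in s, enum_rank x <= enum_rank y].
Definition high_end (s : {set T}) (x : T) : bool :=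
  (x \in s) && [forall y in s, enum_rank y <= enum_rank x].

(* x is adjacent to the internal vertex (s, i): the path for edge s is
   low_end - (s,0) - (s,1) - ... - (s, 2 m s - 1) - high_end *)
Definition sd_attach (x : T) (p : sd_internal) : bool :=
  let s := (val p).1 in let i := val (val p).2 in
  ((i == 0) && low_end s x) || ((i == (2 * m s).-1) && high_end s x).

Definition sd_rel : rel sd_vertex := fun a b =>
  match a, b with
  | inl x, inl y => e x y && (m [set x; y] == 0)
  | inl x, inr p => sd_attach x p
  | inr p, inl x => sd_attach x p
  | inr p, inr q =>
      ((val p).1 == (val q).1) &&
      (((val (val p).2).+1 == val (val q).2) || ((val (val q).2).+1 == val (val p).2))
  end.
End Subdivision.
Arguments sd_rel {T} e m.
Arguments sd_vertex {T} e m.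

(* Main.v *)
Require Import Defs.
From mathcomp Require Import all_boot zify.
Set Implicit Arguments. Unset Strict Implicit. Unset Printing Implicit Defensive.

Section Gen.
Variables (V : finType) (r : rel V).

Lemma indep_le (S : {set V}) : independent r S -> #|S| <= alpha r.
Proof. by move=> h; exact: (@leq_bigmax_cond _ (fun S => independent r S) (fun S => #|S|) S h). Qed.

Lemma alpha_ex : exists S, independent r S /\ #|S| = alpha r.
Proof.
have h0 : 0 < #|[pred S : {set V} | independent r S]|.
  apply/card_gt0P; exists set0; rewrite inE /independent.
  by apply/forallP => x; rewrite inE.
have [S HS HE] := eq_bigmax_cond (fun S : {set V} => #|S|) h0.
by exists S; split => //; rewrite /alpha HE.
Qed.

Lemma indepP (S : {set V}) x y : independent r S -> x \in S -> y \in S -> r x y = false.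
Proof. by move=> /forallP/(_ x)/implyP h /h /forallP/(_ y)/implyP h2 /h2 /negbTE. Qed.

Lemma indepI (S : {set V}) : (forall x y, x \in S -> y \in S -> r x y = false) -> independent r S.
Proof.
move=> h; apply/forallP => x; apply/implyP => hx; apply/forallP => y; apply/implyP => hy.
by rewrite h.
Qed.

Lemma card_sum_set (A B : finType) (X : {set A + B}) :
  #|X| = #|[set a | inl a \in X]| + #|[set b | inr b \in X]|.
Proof.
have inl_inj : injective (@inl A B) by move=> ?? [].
have inr_inj : injective (@inr A B) by move=> ?? [].
have eX : X = inl @: [set a | inl a \in X] :|: inr @: [set b | inr b \in X].
  apply/setP => -[a|b]; rewrite !inE.
  - rewrite mem_imset //.
    rewrite inE; case: imsetP => [[? _ //]|_]; by rewrite orbF.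
  - rewrite mem_imset //.
    rewrite inE; case: imsetP => [[? _ //]|_] //.
have dj : [disjoint inl @: [set a | inl a \in X] & inr @: [set b | @inr A B b \in X]].
  apply/pred0P => z /=; case: z => [a|b]; apply/andP => -[/imsetP[? _ ?] /imsetP[? _ ?]] //.
have := (leq_card_setU (inl @: [set a | inl a \in X]) (inr @: [set b | @inr A B b \in X])).2.
rewrite dj -eX => /eqP ->.
by rewrite !card_imset.
Qed.

End Gen.
Section Main.
Variables (T : finType) (e : rel T) (e_sym : symmetric e) (e_irr : irreflexive e)
  (m : {set T} -> nat).

Local Notation H := (sd_vertex e m).
Local Notation sI := (sd_internal e m).
Local Notation W := ({set T} * 'I_(sd_bound m))%type.

Lemma edge_ends (s : {set T}) : s \in edge_set e -> exists u v,
  [/\ s = [set u; v], e u v, u != v, low_end s u & high_end s v].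
Proof.
rewrite inE => /existsP[a /existsP[b /andP[/eqP-> eab]]].
have key : forall u v : T, e u v -> enum_rank u <= enum_rank v ->
   [/\ [set u; v] = [set u; v], e u v, u != v, low_end [set u; v] u & high_end [set u; v] v].
  move=> u v huv le; split => //.
  - by apply: contraTneq huv => ->; rewrite e_irr.
  - rewrite /low_end !inE eqxx /=; apply/forallP => y; apply/implyP.
    by rewrite !inE => /orP[]/eqP->.
  - rewrite /high_end !inE eqxx orbT /=; apply/forallP => y; apply/implyP.
    by rewrite !inE => /orP[]/eqP->.
case: (leqP (enum_rank a) (enum_rank b)) => h.
  by exists a, b; apply: key.
exists b, a; rewrite [[set a; b]]setUC; apply: key; first by rewrite e_sym.
exact: ltnW.
Qed.

Lemma low_uniq (s : {set T}) x y : low_end s x -> low_end s y -> x = y.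
Proof.
move=> /andP[hx /forallP hxa] /andP[hy /forallP hya].
apply: enum_rank_inj; apply/val_inj/eqP; rewrite eqn_leq.
by rewrite (implyP (hxa y) hy) (implyP (hya x) hx).
Qed.

Lemma high_uniq (s : {set T}) x y : high_end s x -> high_end s y -> x = y.
Proof.
move=> /andP[hx /forallP hxa] /andP[hy /forallP hya].
apply: enum_rank_inj; apply/val_inj/eqP; rewrite eqn_leq.
by rewrite (implyP (hxa y) hy) (implyP (hya x) hx).
Qed.

Lemma bound (s : {set T}) : 2 * m s <= sd_bound m.
Proof. rewrite /sd_bound; exact: (@leq_bigmax _ (fun s => 2 * m s) s). Qed.

Lemma insubdE (o : 'I_(sd_bound m)) j : j < sd_bound m -> val (insubd o j) = j.
Proof. by move=> h; rewrite insubdK. Qed.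

Lemma insubdN (o : 'I_(sd_bound m)) j : j < sd_bound m -> nat_of_ord (insubd o j) = j.
Proof. by move=> h; rewrite insubdK. Qed.

Definition Pv (w : W) := (w.1 \in edge_set e) && (val w.2 < 2 * m w.1).
Definition Half := [set w : W | Pv w && (val w.2 %% 2 == 1)].
Definition M := #|Half|.

Lemma card_sub (Q : pred W) : #|[set p : sI | Q (val p)]| = #|[set w : W | Pv w && Q w]|.
Proof.
rewrite -(card_imset _ val_inj); apply: eq_card => w; rewrite [in RHS]inE.
apply/imsetP/idP => [[p]|/andP[hP hQ]].
  by rewrite inE => hq ->; rewrite hq andbT; exact: (valP p).
by exists (Sub w hP) => //; rewrite inE SubK.
Qed.


Definition bS (S : {set T}) (s : {set T}) := [exists y in S, low_end s y].
Definition QS (S : {set T}) (w : W) := (val w.2 %% 2 == 1) == bS S w.1.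
Definition liftS (S : {set T}) : {set H} := inl @: S :|: inr @: [set p : sI | QS S (val p)].

Lemma liftS_inl (S : {set T}) x : (inl x \in liftS S) = (x \in S).
Proof.
rewrite !inE mem_imset; last by move=> ?? [].
by case: imsetP => [[? _ //]|_]; rewrite orbF.
Qed.

Lemma liftS_inr (S : {set T}) p : (inr p \in liftS S) = QS S (val p).
Proof.
rewrite !inE mem_imset; last by move=> ?? [].
by case: imsetP => [[? _ //]|_]; rewrite inE.
Qed.

Lemma card_liftS (S : {set T}) : #|liftS S| = #|S| + #|[set w : W | Pv w && QS S w]|.
Proof.
rewrite card_sum_set -card_sub; congr (_ + _); apply: eq_card => z.
  by rewrite [in LHS]inE liftS_inl.
by rewrite [in LHS]inE liftS_inr inE.
Qed.

Lemma card_QS (S : {set T}) : M <= #|[set w : W | Pv w && QS S w]|.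
Proof.
pose f (w : W) : W := (w.1, insubd w.2 (if bS S w.1 then val w.2 else (val w.2).-1)).
rewrite /M -(card_in_imset (f := f)).
  apply: subset_leq_card; apply/subsetP => z /imsetP[[s o] hw ->].
  move: hw; rewrite !inE /Pv /QS /f /= => /andP[/andP[hs ho] hodd].
  have hb := bound s.
  case hbs: (bS S s); rewrite insubdN ?hs /=; try lia.
move=> [s1 o1] [s2 o2]; rewrite !inE /Pv /f /= => /andP[/andP[hs1 ho1] hodd1]
  /andP[/andP[hs2 ho2] hodd2] [e1]; subst s2.
have hb := bound s1.
case hbs: (bS S s1); move=> /(congr1 (@nat_of_ord _)); rewrite !insubdN; try lia;
  move=> h; congr pair; apply: ord_inj; lia.
Qed.


Lemma low_high_edge (s : {set T}) u v : s \in edge_set e -> low_end s u -> high_end s v -> e u v.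
Proof.
move=> /edge_ends[a [b [es eab nab la hb]]] hu hv.
by rewrite (low_uniq hu la) (high_uniq hv hb).
Qed.

Lemma liftS_indep (S : {set T}) : independent e S -> independent (sd_rel e m) (liftS S).
Proof.
move=> hS.
have attach : forall x (p : sI), x \in S -> QS S (val p) -> sd_attach x p = false.
  move=> x [[s o] hp] hx; have /andP[/= hs /= ho] := hp; rewrite /QS /sd_attach /= => hq.
  apply/negbTE; apply/negP => /orP[/andP[/eqP ho0 hl] | /andP[/eqP hoe hh]].
  - have hb : bS S s by apply/existsP; exists x; rewrite hx.
    by move: hq; rewrite hb ho0.
  - have ho1 : (o %% 2 == 1) = true by lia.
    move: hq; rewrite ho1 => /eqP/esym/existsP[y /andP[hy hly]].
    have := low_high_edge hs hly hh => exy.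
    by rewrite (indepP hS hy hx) in exy.
apply: indepI => -[x|p] [y|q]; rewrite ?liftS_inl ?liftS_inr /= => hx hy.
- by rewrite (indepP hS hx hy).
- exact: attach.
- exact: attach.
- move: p q hx hy => [[s o] hp] [[s' o'] hq] /=; rewrite /QS /= => h1 h2.
  apply/negbTE/negP => /andP[/eqP es hc]; subst s'.
  move/eqP: h1 => h1; move/eqP: h2 => h2; rewrite -h2 in h1.
  move: h1 hc; (do 2 case: eqP) => * //; lia.
Qed.

Lemma proj (S' : {set H}) (x0 : T) : independent (sd_rel e m) S' ->
  exists S : {set T}, [/\ independent e S, #|S'| <= #|S| + M & (inl x0 \in S' -> x0 \in S)].
Proof.
move=> hS'.
set A := [set x | inl x \in S'].
set Bp := [set p : sI | inr p \in S'].
set Bad := [set s in edge_set e | s \subset A].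
pose c (s : {set T}) := odflt x0 [pick y in s | y != x0].
set R := c @: Bad.
have adj := indepP hS'.
have hc : forall s, s \in edge_set e -> c s \in s /\ c s != x0.
  move=> s /edge_ends[u [v [es _ nuv _ _]]].
  have [y [hy hyx]] : exists y, y \in s /\ y != x0.
    case: (eqVneq u x0) => [hu|hu]; [exists v | exists u]; rewrite es !inE eqxx ?orbT;
      split => //; by rewrite -hu eq_sym.
  rewrite /c; case: pickP => [z /andP[hz hzx]|none] //=.
  by have := none y; rewrite hy hyx.
have inA : forall x, (x \in A) = (inl x \in S') by move=> x; rewrite inE.
have mpos : forall s, s \in Bad -> 0 < m s.
  move=> s; rewrite inE => /andP[hs /subsetP sub].
  have [u [v [es euv _ _ _]]] := edge_ends hs.
  rewrite lt0n; apply/negP => /eqP m0.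
  have hu : inl u \in S' by rewrite -inA; apply: sub; rewrite es !inE eqxx.
  have hv : inl v \in S' by rewrite -inA; apply: sub; rewrite es !inE eqxx orbT.
  by have := adj _ _ hu hv; rewrite /= euv -es m0 eqxx.
have badi : forall s (o : 'I_(sd_bound m)) hp, inr (Sub (s, o) hp : sI) \in S' ->
    s \subset A -> 0 < o < (2 * m s).-1.
  move=> s o hp hpS /subsetP sub.
  have /andP[/= hs /= ho] := hp.
  have [u [v [es euv nuv lu hv]]] := edge_ends hs.
  have hu : inl u \in S' by rewrite -inA; apply: sub; rewrite es !inE eqxx.
  have hv' : inl v \in S' by rewrite -inA; apply: sub; rewrite es !inE eqxx orbT.
  have a1 := adj _ _ hu hpS; have a2 := adj _ _ hv' hpS.
  move: a1 a2; rewrite /= /sd_attach /= lu hv !andbT => /norP[/eqP n1 _] /norP[_ /eqP n2].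
  clear -ho n1 n2; apply/andP; split; lia.
pose j (p : sI) : nat := let i := nat_of_ord (val p).2 in
  if (val p).1 \subset A then 2 * ((i + 1) %/ 2) - 1 else 2 * (i %/ 2) + 1.
pose phi1 (p : sI) : W := ((val p).1, insubd (val p).2 (j p)).
have half1 : forall p, p \in Bp -> phi1 p \in Half.
  move=> [[s o] hp]; rewrite inE => hpS.
  have /andP[/= hs /= ho] := hp.
  have hb := bound s.
  rewrite inE /Pv /phi1 /j /= hs /=.
  case hsub: (s \subset A).
    have := badi _ _ _ hpS hsub => /andP[h1 h2].
    rewrite insubdN; last by clear -ho hb h1 h2; lia.
    clear -ho hb h1 h2; apply/andP; split; lia.
  rewrite insubdN; last by clear -ho hb; lia.
  clear -ho hb; apply/andP; split; lia.
have inj1 : {in Bp &, injective phi1}.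
  move=> [[s o] hp] [[s' o'] hq]; rewrite !inE => hpS hqS; rewrite /phi1 /j /= => -[es]; subst s'.
  have /andP[/= hs /= ho] := hp.
  have /andP[_ /= ho'] := hq.
  have hb := bound s.
  have hadj := adj _ _ hpS hqS; rewrite /= eqxx /= in hadj.
  move/norP: hadj => [/eqP a1 /eqP a2].
  case hsub: (s \subset A).
    have := badi _ _ _ hpS hsub => /andP[h1 h2].
    have := badi _ _ _ hqS hsub => /andP[h1' h2'].
    move=> /(congr1 (@nat_of_ord _)); rewrite !insubdN; try (clear -ho ho' hb h1 h2 h1' h2'; lia).
    move=> heq; have eo : nat_of_ord o = o' by clear -ho ho' hb h1 h2 h1' h2' a1 a2 heq; lia.
    by apply: val_inj => /=; congr pair; apply: ord_inj.
  move=> /(congr1 (@nat_of_ord _)); rewrite !insubdN; try (clear -ho ho' hb; lia).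
  move=> heq; have eo : nat_of_ord o = o' by clear -ho ho' hb a1 a2 heq; lia.
  by apply: val_inj => /=; congr pair; apply: ord_inj.
have cB : #|Bp| + #|Bad| <= M.
  have [B0|[s0 hs0]] := set_0Vmem Bad.
    rewrite B0 cards0 addn0 /M -(card_in_imset inj1); apply: subset_leq_card.
    by apply/subsetP => w /imsetP[p hp ->]; exact: half1.
  have hm0 := mpos _ hs0; have hb0 := bound s0.
  have lt0 : (2 * m s0).-1 < sd_bound m by clear -hm0 hb0; lia.
  pose o0 : 'I_(sd_bound m) := Ordinal lt0.
  pose phi2 (s : {set T}) : W := (s, insubd o0 (2 * m s).-1).
  have inj2 : {in Bad &, injective phi2} by move=> ?? _ _ [].
  have half2 : forall s, s \in Bad -> phi2 s \in Half.
    move=> s hs; have hm := mpos _ hs; have hbs := bound s.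
    move: hs; rewrite inE => /andP[hs _].
    rewrite inE /Pv /phi2 /= hs insubdN /=; last by clear -hm hbs; lia.
    clear -hm hbs; apply/andP; split; lia.
  have dj : [disjoint phi1 @: Bp & phi2 @: Bad].
    apply/pred0P => w /=; apply/andP => -[/imsetP[p hp ->] /imsetP[s hs]].
    move: p hp => [[s1 o] hp]; rewrite inE => hpS; rewrite /phi1 /phi2 /j /= => -[es]; subst s1.
    have /andP[/= hs1 /= ho] := hp; have hbs := bound s; have hm := mpos _ hs.
    move: (hs); rewrite inE => /andP[_ hsub]; rewrite hsub.
    have := badi _ _ _ hpS hsub => /andP[h1 h2].
    move=> /(congr1 (@nat_of_ord _)); rewrite !insubdN; try (clear -ho hbs hm h1 h2; lia); move=> heq; exfalso; clear -ho hbs hm h1 h2 heq; lia.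
  rewrite /M -(card_in_imset inj1) -(card_in_imset inj2).
  have := (leq_card_setU (phi1 @: Bp) (phi2 @: Bad)).2; rewrite dj => /eqP <-.
  apply: subset_leq_card; apply/subsetP => w; rewrite inE => /orP[]/imsetP[z hz ->].
    exact: half1.
  exact: half2.
exists (A :\: R); split.
- apply: indepI => x y; rewrite !in_setD !inA => /andP[hxR hx] /andP[hyR hy].
  apply/negbTE/negP => exy.
  have hs : [set x; y] \in edge_set e.
    by rewrite inE; apply/existsP; exists x; apply/existsP; exists y; rewrite eqxx exy.
  case: (eqVneq (m [set x; y]) 0) => [m0|mn0].
    by have := adj _ _ hx hy; rewrite /= exy m0 eqxx.
  have hbad : [set x; y] \in Bad.
    rewrite inE hs /=; apply/subsetP => z; rewrite !inE => /orP[]/eqP->.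
      by rewrite ?inE ?inA.
    by rewrite ?inE ?inA.
  have [hcs _] := hc _ hs.
  have hcR : c [set x; y] \in R by apply: imset_f.
  move: hcs; rewrite !inE => /orP[]/eqP hcx; rewrite hcx in hcR.
    by rewrite hcR in hxR.
  by rewrite hcR in hyR.
- rewrite card_sum_set -/A -/Bp.
  have cA : #|A| <= #|A :\: R| + #|Bad|.
    apply: (@leq_trans #|A :\: R :|: R|).
      apply: subset_leq_card; apply/subsetP => x hx; rewrite in_setU in_setD hx andbT.
      by case: (x \in R).
    apply: (leq_trans (leq_card_setU _ _).1).
    rewrite leq_add2l; exact: leq_imset_card.
  clear -cA cB; lia.
- move=> hx0; rewrite in_setD inA hx0 andbT; apply/imsetP => -[s hs hcs].
  move: (hs); rewrite inE => /andP[hse _].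
  have [_ ne] := hc s hse.
  by rewrite -hcs eqxx in ne.
Qed.

Lemma alpha_upper (S' : {set H}) : independent (sd_rel e m) S' -> #|S'| <= alpha e + M.
Proof.
move=> hS'; case: (set_0Vmem S') => [->|[z hz]]; first by rewrite cards0.
have x0 : T.
  case: z hz => [x _|[[s o] hp] _]; first exact x.
  have /andP[/= hs _] := hp.
  case: (set_0Vmem s) => [s0|[x _]]; last exact x.
  exfalso; have [u [v [es _ _ _ _]]] := edge_ends hs.
  by have := in_set0 u; rewrite -s0 es !inE eqxx.
have [S [hS hc _]] := proj x0 hS'.
apply: (leq_trans hc); rewrite leq_add2r; exact: indep_le.
Qed.

Lemma alpha_eq : alpha (sd_rel e m) = alpha e + M.
Proof.
apply/eqP; rewrite eqn_leq; apply/andP; split.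
  have [S' [hS' <-]] := alpha_ex (sd_rel e m); exact: alpha_upper.
have [S [hS hc]] := alpha_ex e; rewrite -hc.
apply: leq_trans (indep_le (liftS_indep hS)).
by rewrite card_liftS leq_add2l card_QS.
Qed.

Lemma max_lift S : max_indep e S -> max_indep (sd_rel e m) (liftS S).
Proof.
move=> /andP[hS /eqP hc]; rewrite /max_indep liftS_indep //= eqn_leq indep_le ?liftS_indep //=.
by rewrite alpha_eq card_liftS -hc leq_add2l card_QS.
Qed.

Lemma main_thm : one_extendable e <-> one_extendable (sd_rel e m).
Proof.
split.
- move=> hG [x|p].
    have [S [hS hx]] := hG x; exists (liftS S); by rewrite max_lift // liftS_inl.
  move: p => [[s o] hp]; have /andP[/= hs /= ho] := hp.
  have [u [v [es euv nuv lu hv]]] := edge_ends hs.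
  case ho2: (o %% 2 == 1).
    have [S [hS hu]] := hG u; exists (liftS S); split; first exact: max_lift.
    rewrite liftS_inr /QS /= ho2; apply/eqP/esym/existsP; exists u; by rewrite hu lu.
  have [S [hS hvS]] := hG v; exists (liftS S); split; first exact: max_lift.
  rewrite liftS_inr /QS /= ho2 eq_sym eqbF_neg; apply/existsP => -[y /andP[hy ly]].
  have yu := low_uniq ly lu; subst y.
  move: hS => /andP[hi _].
  by have := indepP hi hy hvS; rewrite euv.
- move=> hH x; have [S' [hS' hx]] := hH (inl x).
  move: hS' => /andP[hi /eqP hc].
  have [S [hS hle hx0]] := proj x hi.
  exists S; split; last exact: hx0.
  rewrite /max_indep hS eqn_leq indep_le //=.
  by rewrite hc alpha_eq leq_add2r in hle.
Qed.

End Main.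

Theorem lemma3 (T : finType) (e : rel T) (e_sym : symmetric e) (e_irr : irreflexive e)
  (m : {set T} -> nat) :
  one_extendable e <-> one_extendable (sd_rel e m).
Proof. exact: main_thm. Qed.
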